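(* Let $\oplus$ be a combinator. Then: (1) $\oplus$ satisfies ($\oplus$UB): $\min(\preceq_{1\oplus 2}, S) \subseteq \min(\preceq_1, S) \cup \min(\preceq_2, S)$ for all $S \subseteq W$ and all pairs in its domain, if and only if it satisfies ($\oplus$SPU+): for all $x,y,z \in W$, if $x \prec_1 y$ and $z \prec_2 y$ then $x \prec_{1\oplus 2} y$ or $z \prec_{1\oplus 2} y$. (2) $\oplus$ satisfies ($\oplus$LB): for all $S \subseteq W$, either $\min(\preceq_1, S) \subseteq \min(\preceq_{1\oplus 2}, S)$ or $\min(\preceq_2, S) \subseteq \min(\preceq_{1\oplus 2}, S)$, if and only if it satisfies ($\oplus$WPU+): for all $x,y,z \in W$, if $x \preceq_1 y$ and $z \preceq_2 y$ then $x \preceq_{1\oplus 2} y$ or $z \preceq_{1\oplus 2} y$. (All conditions are required for every pair $\langle \preceq_1, \preceq_2\rangle$ in the domain of $\oplus$.)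
   Context: $W$ is a finite nonempty set (of possible worlds). A tpo is a total preorder on $W$; for a tpo $\preceq$, $\prec$ is its strict part and $\sim$ its symmetric part. For $S \subseteq W$, $\min(\preceq, S) = \{x \in S : x \preceq y \text{ for all } y \in S\}$. A combinator is a function $\oplus$ taking pairs of tpos $\langle \preceq_1, \preceq_2\rangle$ (from its domain) to a tpo $\preceq_1 \oplus \preceq_2$, written $\preceq_{1\oplus 2}$, with strict part $\prec_{1\oplus 2}$. *)

(* Defs.v *)
From mathcomp Require Import all_boot.
Set Implicit Arguments. Unset Strict Implicit. Unset Printing Implicit Defensive.

Section Tpo.
Variable W : finType.

Definition tpo (le : rel W) : Prop :=
  (forall x y, le x y || le y x) /\ (forall x y z, le x y -> le y z -> le x z).

Definition strict (le : rel W) : rel W := fun x y => le x y && ~~ le y x.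

Definition minset (le : rel W) (S : {set W}) : {set W} :=
  [set x in S | [forall y in S, le x y]].

Definition combinator (dom : rel W -> rel W -> Prop)
    (comb : rel W -> rel W -> rel W) : Prop :=
  forall le1 le2, dom le1 le2 -> [/\ tpo le1, tpo le2 & tpo (comb le1 le2)].

Definition UB (dom : rel W -> rel W -> Prop) (comb : rel W -> rel W -> rel W) : Prop :=
  forall le1 le2, dom le1 le2 -> forall S : {set W},
    minset (comb le1 le2) S \subset minset le1 S :|: minset le2 S.

Definition SPU_plus (dom : rel W -> rel W -> Prop) (comb : rel W -> rel W -> rel W) : Prop :=
  forall le1 le2, dom le1 le2 -> forall x y z : W,
    strict le1 x y -> strict le2 z y ->
    strict (comb le1 le2) x y \/ strict (comb le1 le2) z y.

Definition LB (dom : rel W -> rel W -> Prop) (comb : rel W -> rel W -> rel W) : Prop :=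
  forall le1 le2, dom le1 le2 -> forall S : {set W},
    minset le1 S \subset minset (comb le1 le2) S \/
    minset le2 S \subset minset (comb le1 le2) S.

Definition WPU_plus (dom : rel W -> rel W -> Prop) (comb : rel W -> rel W -> rel W) : Prop :=
  forall le1 le2, dom le1 le2 -> forall x y z : W,
    le1 x y -> le2 z y -> comb le1 le2 x y \/ comb le1 le2 z y.
End Tpo.

(* Main.v *)
Require Import Defs.
From mathcomp Require Import all_boot.
Import Defs.

Lemma min_exists (W : finType) (le : rel W) (S : {set W}) (x0 : W) :
  tpo le -> x0 \in S -> exists y, y \in minset le S.
Proof.
move=> [tot tr] Hx0.
case: (arg_minnP (fun y => #|[set v | le v y]|) Hx0) => y yS Hmin.
exists y; rewrite /minset inE; apply/andP; split => //; apply/forall_inP => u uS.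
apply/negPn/negP => Nyu.
have Huy : le u y by move: (tot y u); rewrite (negbTE Nyu).
have : [set v | le v u] \proper [set v | le v y].
  apply/properP; split.
    by apply/subsetP => v; rewrite !inE => Hv; apply: tr Hv Huy.
  by exists y; rewrite !inE //; move: (tot y y); rewrite orbb.
move/proper_card => H; have := Hmin u uS; rewrite leqNgt H //.
Qed.

Lemma refl_tpo (W : finType) (le : rel W) x : tpo le -> le x x.
Proof. by case=> tot _; move: (tot x x); rewrite orbb. Qed.

Theorem proposition3 (W : finType) (w0 : W)
    (dom : rel W -> rel W -> Prop) (comb : rel W -> rel W -> rel W) :
  combinator dom comb ->
  (UB dom comb <-> SPU_plus dom comb) /\ (LB dom comb <-> WPU_plus dom comb).
Proof.
move=> Hc; split; split.
- move=> Hub le1 le2 D x y z /andP[H1 N1] /andP[H2 N2].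
  have [[t1 tr1] [t2 tr2] [tc trc]] := Hc _ _ D.
  case Ex: (comb le1 le2 y x); last first.
    by left; apply/andP; split=> //; move: (tc x y); rewrite Ex orbF.
  case Ez: (comb le1 le2 y z); last first.
    by right; apply/andP; split=> //; move: (tc z y); rewrite Ez orbF.
  exfalso.
  have : y \in minset (comb le1 le2) [set x; y; z].
    rewrite /minset inE !inE eqxx orbT /=; apply/forall_inP => u.
    by rewrite !inE => /orP[/orP[]|] /eqP->; rewrite ?Ex ?Ez ?refl_tpo //; apply: (proj2 (Hc _ _ D)).
  move/(subsetP (Hub _ _ D [set x; y; z])); rewrite !inE => /orP[]/andP[_ /forall_inP H].
    by move: (H x); rewrite !inE eqxx /= (negbTE N1) => /(_ isT).
  by move: (H z); rewrite !inE eqxx orbT /= (negbTE N2) => /(_ isT).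
- move=> Hs le1 le2 D S; apply/subsetP => y.
  have [[t1 tr1] [t2 tr2] [tc trc]] := Hc _ _ D.
  rewrite !inE => /andP[yS /forall_inP Hy]; rewrite yS /=.
  apply/negPn/negP; rewrite negb_or => /andP[/forall_inPn[x xS N1] /forall_inPn[z zS N2]].
  have S1 : strict le1 x y by rewrite /strict N1 andbT; move: (t1 y x); rewrite (negbTE N1).
  have S2 : strict le2 z y by rewrite /strict N2 andbT; move: (t2 y z); rewrite (negbTE N2).
  by case: (Hs _ _ D _ _ _ S1 S2) => /andP[_]; rewrite Hy.
- move=> Hlb le1 le2 D x y z H1 H2.
  have [[t1 tr1] [t2 tr2] [tc trc]] := Hc _ _ D.
  case Ex: (comb le1 le2 x y); first by left.
  case Ez: (comb le1 le2 z y); first by right.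
  exfalso.
  set S := [set x; y; z].
  have yS : y \in S by rewrite !inE eqxx orbT.
  have Nxz : forall m, m \in [set x; z] -> m \notin minset (comb le1 le2) S.
    move=> m mI; rewrite /minset inE; apply/negP => /andP[_ /forall_inP/(_ y yS)].
    by move: mI; rewrite !inE => /orP[]/eqP->; rewrite ?Ex ?Ez.
  have pick : forall le a, tpo le -> le a y -> a \in [set x; z] ->
      exists2 m, m \in minset le S & m \in [set x; z].
    move=> le a [t tr] Ha aI.
    have [m mM] := @min_exists _ le _ _ (conj t tr) yS.
    have mS : m \in S by move: mM; rewrite /minset inE => /andP[].
    case: (eqVneq m y) => Emy.
      exists a => //; rewrite /minset inE; apply/andP; split.
        by move: aI; rewrite !inE => /orP[]->; rewrite ?orbT.
      apply/forall_inP => u uS; apply: tr Ha _; rewrite -Emy.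
      by move: mM; rewrite /minset inE => /andP[_ /forall_inP]; apply.
    exists m => //; move: mS Emy; rewrite !inE => /orP[/orP[]|]/eqP->; rewrite ?eqxx ?orbT //.
  have xI : x \in [set x; z] by rewrite !inE eqxx.
  have zI : z \in [set x; z] by rewrite !inE eqxx orbT.
  have [m1 M1 I1] := pick le1 x (conj t1 tr1) H1 xI.
  have [m2 M2 I2] := pick le2 z (conj t2 tr2) H2 zI.
  case: (Hlb _ _ D S) => /subsetP Hs.
    by move: (Nxz _ I1); rewrite Hs.
  by move: (Nxz _ I2); rewrite Hs.
- move=> Hw le1 le2 D S.
  have [[t1 tr1] [t2 tr2] [tc trc]] := Hc _ _ D.
  case: (set_0Vmem S) => [->|[x0 x0S]].
    by left; apply/subsetP => u; rewrite /minset inE in_set0.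
  have [y yM] := @min_exists _ (comb le1 le2) _ _ (conj tc trc) x0S.
  move: (yM); rewrite /minset inE => /andP[yS /forall_inP Hy].
  case: (boolP (minset le1 S \subset minset (comb le1 le2) S)) => A; first by left.
  case: (boolP (minset le2 S \subset minset (comb le1 le2) S)) => B; first by right.
  exfalso.
  move: A B => /subsetPn[x xM xN] /subsetPn[z zM zN].
  move: xM zM; rewrite !inE => /andP[xS /forall_inP Hx] /andP[zS /forall_inP Hz].
  case: (Hw _ _ D x y z (Hx y yS) (Hz y yS)) => H.
    move: xN; rewrite /minset inE xS /=; move/negP; apply; apply/forall_inP => u uS.
    by apply: trc H (Hy u uS).
  move: zN; rewrite /minset inE zS /=; move/negP; apply; apply/forall_inP => u uS.
  by apply: trc H (Hy u uS).
Qed.
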